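(* Let $2\le r\le m\le n$, $k\ge1$, $R=F[t]$ and $M=R^n$. Let $\mathbf u_1,\dots,\mathbf u_m\in M$ have all components polynomials of degree at most $k-1$, written $\mathbf u_j=\sum_{l=0}^{k-1}\mathbf u_j^{(l)}t^l$ with $\mathbf u_j^{(l)}\in F^n$, and let $\overline{\mathbf u_j}$ denote the image of $\mathbf u_j$ in $M/t^kM$. Suppose that $\overline{\mathbf u_{j_1}}\wedge\dots\wedge\overline{\mathbf u_{j_r}}=0$ in $\bigwedge^r(M/t^kM)$ for all $1\le j_1<\dots<j_r\le m$, and that $\mathbf u_1^{(0)}\wedge\dots\wedge\mathbf u_{r-1}^{(0)}\neq0$. Then for all $1\le j_1<\dots<j_r<j_{r+1}\le m$, $$\mathbf u_{j_1}\wedge\dots\wedge\mathbf u_{j_r}\wedge\mathbf u_{j_{r+1}}\in t^{2k}\textstyle\bigwedge^{r+1}M.$$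
   Context: $F$ is an algebraically closed field; wedge products are taken over the relevant ring ($R$ for elements of $M$, $R/(t^k)$ for elements of $M/t^kM$). Here $r+1\le m$ is needed for the conclusion to be nonvacuous. *)

(* Defs.v *)
From HB Require Import structures.
From mathcomp Require Import all_boot all_order all_algebra.
Set Implicit Arguments. Unset Strict Implicit. Unset Printing Implicit Defensive.
Import GRing.Theory.
Local Open Scope ring_scope.

Definition strictly_increasing (p q : nat) (s : 'I_p -> 'I_q) : Prop :=
  forall i j : 'I_p, (i < j)%N -> (s i < s j)%N.

(* Coordinate of v_1 /\ ... /\ v_p (v_l in R^n) on the standard basis vector
   e_{s 1} /\ ... /\ e_{s p} of the free module /\^p R^n : the p x p minor. *)
Definition wedge_coord (R : comNzRingType) (n p : nat) (v : 'I_p -> 'cV[R]_n)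
  (s : 'I_p -> 'I_n) : R :=
  \det (\matrix_(i < p, l < p) v l (s i) ord0).

Definition wedge_neq0 (R : comNzRingType) (n p : nat) (v : 'I_p -> 'cV[R]_n) : Prop :=
  exists s : 'I_p -> 'I_n, strictly_increasing s /\ wedge_coord v s != 0.

Definition wedge_in_tpow (F : fieldType) (n p : nat) (c : nat)
  (v : 'I_p -> 'cV[{poly F}]_n) : Prop :=
  forall s : 'I_p -> 'I_n, strictly_increasing s -> ('X^c %| wedge_coord v s)%R.

(* Image of v_1 /\ ... /\ v_p (v_l in F[t]^n) in /\^p (M/t^k M) is zero, via
   /\^p (M / t^k M) = /\^p M / t^k /\^p M (M free). *)
Definition wedge_mod_eq0 (F : fieldType) (n p k : nat) (v : 'I_p -> 'cV[{poly F}]_n) : Prop :=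
  wedge_in_tpow k v.

Definition coef0_vec (F : fieldType) (n : nat) (u : 'cV[{poly F}]_n) : 'cV[F]_n :=
  \col_i (u i ord0)`_0.

(* Main.v *)
Require Import Defs.
From mathcomp Require Import all_boot all_order all_algebra ring fingroup perm.
Set Implicit Arguments. Unset Strict Implicit. Unset Printing Implicit Defensive.
Import GRing.Theory.
Local Open Scope ring_scope.
Lemma L_pure (R : idomainType) q p (X : 'M[R]_(q,p)) (C : 'M[R]_(p,q)) :
  (p < q)%N -> \det (X *m C) = 0.
Proof.
move=> lt; apply/eqP; rewrite -(tofrac_eq0 (R:=R)).
rewrite -(det_map_mx (@FracField.tofrac R)) map_mxM.
apply/negP => /negP H.
have U : (map_mx (@FracField.tofrac R) X *m map_mx (@FracField.tofrac R) C) \in unitmx.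
  by rewrite unitmxE unitfE.
have := mxrankM_maxl (map_mx (@FracField.tofrac R) X) (map_mx (@FracField.tofrac R) C).
rewrite (mxrank_unit U) => /leq_trans/(_ (rank_leq_col _)).
by rewrite leqNgt lt.
Qed.
Lemma Core (R : idomainType) (s : R) q : forall p (X : 'M[R]_(q,p)) (C : 'M[R]_(p,q)) (Y : 'M[R]_q),
  exists c, \det (X *m C + s *: Y) = s ^+ (q - p) * c.
Proof.
elim: q => [|q IH] p X C Y.
  by exists (\det (X *m C + s *: Y)); rewrite sub0n expr0 mul1r.
have [lepq|ltqp] := leqP p q; last first.
  exists (\det (X *m C + s *: Y)).
  have -> : (q.+1 - p = 0)%N by apply/eqP; rewrite subn_eq0.
  by rewrite expr0 mul1r.
suff H : forall N (T : {set 'I_q.+1}), (#|T| <= N)%N -> forall Y : 'M[R]_q.+1,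
    (forall i, i \notin T -> row i Y = 0) ->
    exists c, \det (X *m C + s *: Y) = s ^+ (q.+1 - p) * c.
  by apply: (H _ setT (leqnn _)) => i; rewrite in_setT.
elim=> [|N IHN] T HT {}Y HY.
  have T0 : T = set0 by apply/eqP; rewrite -cards_eq0 -leqn0.
  have -> : Y = 0.
    apply/row_matrixP => i; rewrite HY ?row0 // T0 inE //.
  by exists 0; rewrite scaler0 addr0 mulr0 L_pure.
have [T0|[i0 i0T]] := set_0Vmem T.
  have -> : Y = 0.
    apply/row_matrixP => i; rewrite HY ?row0 // T0 inE //.
  by exists 0; rewrite scaler0 addr0 mulr0 L_pure.
pose Y1 : 'M[R]_q.+1 := \matrix_i (if i == i0 then 0 else row i Y).
pose A := X *m C + s *: Y.
pose Cm : 'M[R]_q.+1 := \matrix_i (if i == i0 then s *: row i0 Y else row i A).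
have E : \det A = 1 * \det (X *m C + s *: Y1) + 1 * \det Cm.
  apply: (determinant_multilinear (i0 := i0)).
  - rewrite !scale1r /A /Y1 /Cm; apply/rowP => j; rewrite !mxE.
    by rewrite eqxx !mxE mulr0 addr0.
  - apply/matrixP => k j; rewrite !mxE (eq_sym (lift i0 k)) (negbTE (neq_lift i0 k)) /A !mxE //.
  - apply/matrixP => k j; rewrite !mxE (eq_sym (lift i0 k)) (negbTE (neq_lift i0 k)) /A !mxE //.
have [c1 Hc1] : exists c, \det (X *m C + s *: Y1) = s ^+ (q.+1 - p) * c.
  apply: (IHN (T :\ i0)).
    by rewrite (cardsD1 i0 T) i0T add1n ltnS in HT.
  move=> i; rewrite /Y1 rowK in_setD1 negb_and negbK.
  by case: eqP => // _ /= /HY.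
have [c2 Hc2] : exists c, \det Cm = s ^+ (q.+1 - p) * c.
  rewrite (expand_det_row _ i0).
  have Hm : forall j, exists c, \det (row' i0 (col' j Cm)) == s ^+ (q - p) * c.
    move=> j0.
    have -> : row' i0 (col' j0 Cm) = row' i0 X *m col' j0 C + s *: row' i0 (col' j0 Y).
      apply/matrixP => k l; rewrite !mxE (eq_sym (lift i0 k)) (negbTE (neq_lift i0 k)) !mxE.
      congr (_ + _); apply: eq_bigr => a _; rewrite !mxE //.
    by have [c ->] := IH _ (row' i0 X) (col' j0 C) (row' i0 (col' j0 Y)); exists c.
  exists (\sum_j Y i0 j * ((-1) ^+ (i0 + j) * xchoose (Hm j))).
  rewrite mulr_sumr; apply: eq_bigr => j _.
  move: (xchooseP (Hm j)); move: (xchoose (Hm j)) => c /eqP Hc.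
  rewrite /cofactor Hc mxE eqxx !mxE subSn //.
  by rewrite exprS; ring.
by exists (c1 + c2); rewrite -/A E !mul1r Hc1 Hc2 mulrDr.
Qed.
Lemma Bord (R : idomainType) n' (P : 'M[R]_n') (b : 'cV[R]_n') (c : 'rV[R]_n') (d : R) :
  \det P != 0 ->
  \det (block_mx d%:M c b P : 'M_(1 + n')) = d * \det P - (c *m \adj P *m b) 0 0.
Proof.
move=> nz.
pose N : 'M[R]_(1 + n') := block_mx (\det P)%:M 0 (- (\adj P *m b)) 1%:M.
have E : block_mx d%:M c b P *m N =
   block_mx (d * \det P - (c *m \adj P *m b) 0 0)%:M c 0 P.
  rewrite /N mulmx_block !mulmx0 !mulmx1 !add0r.
  congr block_mx.
  - rewrite (mulmxN c) mulmxA -scalar_mxM.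
    apply/matrixP => i j; rewrite !ord1 !mxE /= !mulr1n; done.
  - have -> : P *m - (\adj P *m b) = - (P *m (\adj P *m b)) by apply: mulmxN.
    by rewrite mulmxA mul_mx_adj mul_scalar_mx mul_mx_scalar subrr.
have := congr1 determinant E.
rewrite det_mulmx det_ublock /N det_lblock det1 mulr1 det_scalar1 => H.
by rewrite det_mx11 mxE mulr1n in H; apply: (mulIf nz).
Qed.
Lemma sortperm p N (f : 'I_p -> 'I_N) : injective f ->
  exists sg : 'S_p, strictly_increasing (f \o sg).
Proof.
move=> finj.
pose tt : p.-tuple 'I_N := [tuple f i | i < p].
pose st := sort (fun a b : 'I_N => (a <= b)%N) tt.
have : perm_eq st tt by rewrite perm_sort perm_refl.
case/tuple_permP => sg Est; exists sg => i j ltij.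
have Hs : sorted ltn (map val st).
  rewrite ltn_sorted_uniq_leq; apply/andP; split.
    rewrite (map_inj_uniq val_inj) sort_uniq /tt /= map_inj_uniq // enum_uniq //.
  rewrite sorted_map; apply: sort_sorted => a b; exact: leq_total.
have Ev : map val st = [seq val (f (sg k)) | k <- enum 'I_p].
  by rewrite Est /= -map_comp; apply: eq_map => k /=; rewrite tnth_map tnth_ord_tuple.
have := sorted_ltn_nth ltn_trans 0%N Hs.
rewrite Ev size_map size_enum_ord => /(_ i j (ltn_ord i) (ltn_ord j) ltij).
rewrite !(nth_map i) -?enumT ?size_enum_ord // !nth_ord_enum //.
Qed.
Lemma det_colperm (R : comNzRingType) p (A : 'M[R]_p) (sg : 'S_p) :
  \det A = \det (col_perm sg A) * (-1) ^+ (sg^-1)%g.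
Proof.
rewrite col_permE det_mulmx det_perm -mulrA -expr2 -exprM mulnC exprM sqrrN expr1n.
by rewrite expr1n mulr1.
Qed.

Lemma det_rowperm (R : comNzRingType) p (A : 'M[R]_p) (sg : 'S_p) :
  \det A = \det (row_perm sg A) * (-1) ^+ sg.
Proof.
rewrite row_permE det_mulmx det_perm mulrC mulrA -expr2 -exprM mulnC exprM sqrrN expr1n.
by rewrite expr1n mul1r.
Qed.

Lemma gen_cols (F : fieldType) n m p (u : 'I_m -> 'cV[{poly F}]_n) (d : {poly F})
  (s : 'I_p -> 'I_n) :
  (forall J : 'I_p -> 'I_m, strictly_increasing J ->
     d %| \det (\matrix_(i, l) u (J l) (s i) ord0)) ->
  forall J : 'I_p -> 'I_m, d %| \det (\matrix_(i, l) u (J l) (s i) ord0).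
Proof.
move=> H J.
case: (boolP (injectiveb J)) => [/injectiveP Jinj|/injectivePn [x [y xy Jxy]]].
  have [sg Hsg] := sortperm Jinj.
  rewrite (det_colperm _ sg); apply: dvdp_mulr.
  have -> : col_perm sg (\matrix_(i, l) u (J l) (s i) ord0) =
            \matrix_(i, l) u ((J \o sg) l) (s i) ord0.
    by apply/matrixP => i l; rewrite !mxE.
  exact: H.
rewrite -det_tr (determinant_alternate xy) // => l; rewrite !mxE Jxy //.
Qed.

Lemma gen_rows (F : fieldType) n m p (u : 'I_m -> 'cV[{poly F}]_n) (d : {poly F})
  (J : 'I_p -> 'I_m) :
  (forall s : 'I_p -> 'I_n, strictly_increasing s ->
     d %| \det (\matrix_(i, l) u (J l) (s i) ord0)) ->
  forall s : 'I_p -> 'I_n, d %| \det (\matrix_(i, l) u (J l) (s i) ord0).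
Proof.
move=> H s.
case: (boolP (injectiveb s)) => [/injectiveP sinj|/injectivePn [x [y xy sxy]]].
  have [sg Hsg] := sortperm sinj.
  rewrite (det_rowperm _ sg); apply: dvdp_mulr.
  have -> : row_perm sg (\matrix_(i, l) u (J l) (s i) ord0) =
            \matrix_(i, l) u (J l) ((s \o sg) i) ord0.
    by apply/matrixP => i l; rewrite !mxE.
  exact: H.
rewrite (determinant_alternate xy) // => l; rewrite !mxE sxy //.
Qed.

Theorem theorem4p3 (F : closedFieldType) (n m r k : nat)
  (u : 'I_m -> 'cV[{poly F}]_n) :
  (2 <= r)%N -> (r <= m)%N -> (m <= n)%N -> (1 <= k)%N ->
  (forall (j : 'I_m) (i : 'I_n), (size (u j i ord0) <= k)%N) ->
  (forall J : 'I_r -> 'I_m, strictly_increasing J ->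
     wedge_mod_eq0 k (fun l => u (J l))) ->
  (forall J0 : 'I_r.-1 -> 'I_m, (forall l, val (J0 l) = val l) ->
     wedge_neq0 (fun l => coef0_vec (u (J0 l)))) ->
  forall J : 'I_r.+1 -> 'I_m, strictly_increasing J ->
    wedge_in_tpow (2 * k) (fun l => u (J l)).
Proof.
move=> r2 rm _ _ _.
case: r r2 rm => [|r'] // r2 rm Hmod H0 J _ s _.
have hr : (r' <= m)%N by apply: leq_trans rm; apply: leqnSn.
pose J0 (l : 'I_r') : 'I_m := widen_ord hr l.
have [s0 [_ Hdet0]] := H0 J0 (fun l => erefl).
have HG : forall (J' : 'I_r'.+1 -> 'I_m) (s' : 'I_r'.+1 -> 'I_n),
    'X^k %| \det (\matrix_(i, l) u (J' l) (s' i) ord0).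
  move=> J' s'; apply: (gen_rows (J:=J')) => s2 s2inc.
  apply: (gen_cols (s:=s2)) => J2 J2inc.
  exact: Hmod J2 J2inc s2 s2inc.
rewrite /wedge_coord.
set B := \matrix_(i, l) u (J l) (s i) ord0.
pose P : 'M_r' := \matrix_(a, b) u (J0 b) (s0 a) ord0.
pose D := \det P.
have D0 : ~~ root D 0.
  rewrite /root /D -horner_evalE -det_map_mx.
  have -> : map_mx (horner_eval 0) P = \matrix_(i, l) (coef0_vec (u (J0 l))) (s0 i) ord0.
    by apply/matrixP => i l; rewrite !mxE horner_evalE horner_coef0.
  exact: Hdet0.
have Dnz : D != 0 by apply: contraNneq D0 => ->; rewrite root0.
pose X : 'M_(r'.+2, r') := \matrix_(i, b) u (J0 b) (s i) ord0.
pose Uc : 'M_(r', r'.+2) := \matrix_(a, l) u (J l) (s0 a) ord0.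
pose C := \adj P *m Uc.
pose W := D *: B - X *m C.
have HW : forall i l, 'X^k %| W i l.
  move=> i l.
  have E1 : W i l = \det (block_mx (B i l)%:M (row i X) (col l Uc) P : 'M_(1 + r')).
    rewrite Bord // /W /C mulrC !mxE; congr (_ - _).
    under eq_bigr => j _ do rewrite [(_ *m _) j l]mxE mulr_sumr.
    rewrite exchange_big /=; apply: eq_bigr => b _; rewrite [(_ *m _) 0 b]mxE mulr_suml.
    by apply: eq_bigr => j _; rewrite !mxE mulrA.
  pose J' (a : 'I_(1 + r')) : 'I_m := match split a with inl _ => J l | inr b => J0 b end.
  pose s' (a : 'I_(1 + r')) : 'I_n := match split a with inl _ => s i | inr b => s0 b end.
  rewrite E1.
  have -> : block_mx (B i l)%:M (row i X) (col l Uc) P = \matrix_(a, b) u (J' b) (s' a) ord0.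
    have L1 : forall a' : 'I_1, split (lshift r' a') = inl a' := fun a' => unsplitK (inl a').
    have R1 : forall a' : 'I_r', split (rshift 1 a') = inr a' := fun a' => unsplitK (inr a').
    apply/matrixP => a b; rewrite -(splitK a) -(splitK b).
    case: (split a) => a'; case: (split b) => b' /=;
      rewrite ?block_mxEul ?block_mxEur ?block_mxEdl ?block_mxEdr !mxE /J' /s' ?L1 ?R1 //.
    by rewrite !ord1 eqxx mulr1n.
  exact: (HG J' s').
pose Z : 'M_(r'.+2) := \matrix_(i, l) (W i l %/ 'X^k).
have EB : D *: B = X *m C + 'X^k *: Z.
  apply/matrixP => i l.
  have := HW i l => /divpK HWil.
  have EW : (D *: B) i l = W i l + (X *m C) i l.
    by rewrite /W !mxE subrK.
  rewrite EW -HWil [RHS]mxE [('X^k *: Z) i l]mxE [Z i l]mxE mulrC addrC //.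
have [c Hc] := Core ('X^k) X C Z.
have H2 : 'X^(2 * k) %| \det B * D ^+ r'.+2.
  rewrite mulrC -detZ EB Hc.
  have -> : (r'.+2 - r' = 2)%N by rewrite -addn2 addKn.
  by rewrite -exprM mulnC; apply: dvdp_mulr.
rewrite Gauss_dvdpl // in H2.
apply: coprimep_expl; apply: coprimep_expr.
by rewrite coprimep_sym coprimepX.
Qed.
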